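(* Let $Y$ be a generic Enriques surface. For effective $\beta\in H_2(Y,\mathbb{Z})$ (modulo torsion) with $2\nmid\beta$ and $\beta^2=2d$, let $M_d$ be one of the two connected components of the moduli space of stable $1$-dimensional sheaves $F$ on $Y$ with support class $\beta$ and $\chi(F)=1$ (smooth projective of dimension $2d+1$), with Hilbert–Chow morphism $\rho:M_d\to\mathbb{P}$, perverse Hodge numbers ${}^ph^{i,j}(M_d)=\dim H^j(\mathbb{P},{}^p\mathcal{H}^i(R\rho_*\mathbb{Q}[\dim M_d]))$ and Betti numbers $b_{i,d}=b_i(M_d)$. Let \[ F(u,p,q)=\frac{(1-u^{-1}p)(1-up)}{(-p)}\prod_{m\ge1}\frac{1}{(1-q^m)^8}\prod_{\substack{m\ge1\\ m\text{ odd}}}\frac{1}{(1-u^{-2}q^m)(1-u^2q^m)(1-upq^m)(1-up^{-1}q^m)(1-u^{-1}pq^m)(1-u^{-1}p^{-1}q^m)(1-q^m)^2}. \] Assume that the ${}^ph^{i,j}(M_d)$ depend only on $d$ and that \[ \sum_{d\ge0}\sum_{i,j}{}^ph^{i,j}(M_d)(-1)^{i+j}p^iu^jq^d=F(u,p,q)-\Big(\sum_{d\ge0}u^{-(2d+1)}\sum_{i=0}^{4d+2}(-u)^ib_{i,d}\Big)\prod_{m\ge1}\frac{(1-u^2q^{2m})(1-u^{-2}q^{2m})(1-q^{2m})^2}{(1-upq^{2m})(1-u^{-1}p^{-1}q^{2m})(1-u^{-1}pq^{2m})(1-up^{-1}q^{2m})}. \] Then for all $d\ge0$ and integers $i,j$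 with $i,j<-d/2-1$, \[ {}^ph^{i,j}(M_d)(-1)^{i+j}=\mathrm{Coeff}_{p^iu^jq^d}\big[F(u,p,q)\big]. \]
   Context: $F$ equals, in the paper's notation, $\frac{(1-u^{-1}p)(1-up)}{(-p)}\frac{\Theta(u^2,q^2)}{\Theta(u^2,q)}\frac{\eta(q^2)^8}{\eta(q)^{16}}\frac{\Theta(pu,q^2)\Theta(pu^{-1},q^2)}{\Theta(pu,q)\Theta(pu^{-1},q)}$ with $\Theta(p,q)=(p^{1/2}-p^{-1/2})\prod_{m\ge1}\frac{(1-pq^m)(1-p^{-1}q^m)}{(1-q^m)^2}$ and $\eta(q)=q^{1/24}\prod_{m\ge1}(1-q^m)$. ${}^p\mathcal{H}^i$ is perverse cohomology for the middle perversity. *)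

(* Defs.v *)
(* Elementary model of the ring of formal power series in q
   whose coefficients are Laurent polynomials in u, p with integer
   coefficients, i.e.  Z[u^{+-1}, p^{+-1}][[q]]. *)
From mathcomp Require Import all_boot all_order all_algebra.
Set Implicit Arguments. Unset Strict Implicit. Unset Printing Implicit Defensive.
Import Order.TTheory GRing.Theory Num.Theory.
Local Open Scope ring_scope.

Record Mon := MkMon { mc : int; mpe : int; mue : int }.

Definition Laur := seq Mon.

Definition lcoef (f : Laur) (i j : int) : int :=
  \sum_(t <- f | (mpe t == i) && (mue t == j)) mc t.

Definition lmon (c i j : int) : Laur := [:: MkMon c i j].
Definition lone : Laur := lmon 1 0 0.
Definition ladd (f g : Laur) : Laur := f ++ g.
Definition lopp (f : Laur) : Laur := [seq MkMon (- mc t) (mpe t) (mue t) | t <- f].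
Definition lmul (f g : Laur) : Laur :=
  [seq MkMon (mc s * mc t) (mpe s + mpe t) (mue s + mue t) | s <- f, t <- g].
Definition lexp (f : Laur) (n : nat) : Laur := iter n (lmul f) lone.

Definition Ser := nat -> Laur.

Definition sconst (f : Laur) : Ser := fun d => if d == 0%N then f else [::].
Definition sone : Ser := sconst lone.
Definition sadd (A B : Ser) : Ser := fun d => ladd (A d) (B d).
Definition sopp (A : Ser) : Ser := fun d => lopp (A d).
Definition ssub (A B : Ser) : Ser := sadd A (sopp B).
Definition smul (A B : Ser) : Ser :=
  fun d => flatten [seq lmul (A k) (B (d - k)%N) | k <- iota 0 d.+1].
Definition sprod (l : seq Ser) : Ser := foldr smul sone l.

Definition oneminus (c : Laur) (m : nat) : Ser :=
  sadd sone (fun d => if d == m then lopp c else [::]).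
(* 1 / (1 - c q^m) = sum_k c^k q^{mk}   (m >= 1) *)
Definition geom (c : Laur) (m : nat) : Ser :=
  fun d => if (d %% m == 0)%N then lexp c (d %/ m) else [::].

(* Infinite product prod_{m >= 1} G m, for factors with G m = 1 + O(q^m):
   the coefficient of q^d only involves the factors with m <= d. *)
Definition sprod_inf (G : nat -> Ser) : Ser :=
  fun d => sprod [seq G m | m <- iota 1 d] d.

Definition Coeff (A : Ser) (d : nat) (i j : int) : int := lcoef (A d) i j.

Definition m1 : Laur := lmon 1 0 0.
Definition mu2 : Laur := lmon 1 0 2.
Definition mum2 : Laur := lmon 1 0 (-2).
Definition mup : Laur := lmon 1 1 1.
Definition mupi : Laur := lmon 1 (-1) 1.
Definition muip : Laur := lmon 1 1 (-1).
Definition muipi : Laur := lmon 1 (-1) (-1).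

Definition Fpref : Laur :=
  lmul (lmul (ladd lone (lopp muip)) (ladd lone (lopp mup))) (lmon (-1) (-1) 0).

Definition Fser : Ser :=
  sprod [:: sconst Fpref;
    sprod_inf (fun m => sprod (nseq 8 (geom m1 m)));
    sprod_inf (fun m => if odd m then
        sprod [:: geom mum2 m; geom mu2 m; geom mup m; geom mupi m;
                  geom muip m; geom muipi m; geom m1 m; geom m1 m]
      else sone)].

Definition Bser (b : nat -> nat -> nat) : Ser :=
  fun d => [seq MkMon ((-1) ^+ i * (b i d)%:Z) 0 (i%:Z - (2 * d + 1)%:Z)
           | i <- iota 0 (4 * d + 3)].

Definition Hser : Ser :=
  sprod_inf (fun m =>
    sprod [:: oneminus mu2 (2 * m); oneminus mum2 (2 * m);
              oneminus m1 (2 * m); oneminus m1 (2 * m);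
              geom mup (2 * m); geom muipi (2 * m);
              geom muip (2 * m); geom mupi (2 * m)]).

Definition RHSser (b : nat -> nat -> nat) : Ser := ssub Fser (smul (Bser b) Hser).

(* Main.v *)
Require Import Defs.
From mathcomp Require Import all_boot all_order all_algebra.
From mathcomp Require Import zify ring lra.
Import Order.TTheory GRing.Theory Num.Theory.
Local Open Scope ring_scope.

Definition lb (n : int) (t : Mon) : bool := n <= 2 * mpe t.

Lemma all_lb_mono (a b : int) (f : Laur) : a <= b -> all (lb b) f -> all (lb a) f.
Proof. move=> hab; apply: sub_all => t; rewrite /lb => h; exact: le_trans hab h. Qed.

Lemma lmul_lb a b f g : all (lb a) f -> all (lb b) g -> all (lb (a + b)) (lmul f g).
Proof.
elim: f => [|s f IH] //= /andP[hs hf] hg.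
rewrite all_cat IH // andbT all_map.
apply: sub_all hg => t /=; rewrite /lb /= => ht.
move: hs; rewrite /lb => hs. lia.
Qed.

Lemma lopp_lb a g : all (lb a) (lopp g) = all (lb a) g.
Proof. by rewrite /lopp all_map. Qed.

Lemma lexp_lb a c n : all (lb a) c -> all (lb (a * n%:Z)) (lexp c n).
Proof.
move=> hc; elim: n => [|n IH] /=; first by rewrite mulr0 /lb /=.
have -> : a * n.+1%:Z = a + a * n%:Z by lia.
exact: lmul_lb.
Qed.

Lemma all_flat (P : pred Mon) (s : seq Laur) : all P (flatten s) = all (all P) s.
Proof. by elim: s => //= x s IH; rewrite all_cat IH. Qed.

Definition good (A : Ser) := forall d : nat, all (lb (- (d%:Z))) (A d).

Lemma smul_good A B : good A -> good B -> good (smul A B).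
Proof.
move=> hA hB d; rewrite /smul all_flat all_map.
apply/allP => k; rewrite mem_iota => /andP[_ hk] /=.
have -> : - (d%:Z) = - (k%:Z) + - ((d - k)%N%:Z) by lia.
exact: lmul_lb.
Qed.

Lemma sone_good : good sone.
Proof. move=> d; rewrite /sone /sconst; case: (d == 0)%N => //=; rewrite /lb /=; lia. Qed.

Lemma sprod_map_good (G : nat -> Ser) (s : seq nat) :
  (forall m, m \in s -> good (G m)) -> good (sprod (map G s)).
Proof.
elim: s => [|m s IH] h /=; first exact: sone_good.
apply: smul_good; first by apply: h; rewrite inE eqxx.
by apply: IH => x hx; apply: h; rewrite inE hx orbT.
Qed.

Lemma geom_good c m : (2 <= m)%N -> all (lb (-2)) c -> good (geom c m).
Proof.
move=> hm hc d; rewrite /geom; case: ifP => // _.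
apply: (all_lb_mono _ _ _ _ (lexp_lb _ _ (d %/ m)%N hc)).
have h1 := leq_trunc_div d m.
have h2 : (2 * (d %/ m) <= (d %/ m) * m)%N by rewrite mulnC leq_mul2l hm orbT.
lia.
Qed.

Lemma oneminus_good c m : all (lb 0) c -> good (oneminus c m).
Proof.
move=> hc d; rewrite /oneminus /sadd /ladd all_cat sone_good /=.
case: ifP => // _; rewrite ?lopp_lb ?all_map; apply: (all_lb_mono _ _ _ _ hc); lia.
Qed.

Lemma Bser_good b : good (Bser b).
Proof. move=> d; rewrite /Bser all_map; apply/allP => i _; rewrite /= /lb /=; lia. Qed.

Lemma Hser_good : good Hser.
Proof.
move=> d; rewrite /Hser /sprod_inf.
apply: sprod_map_good => m; rewrite mem_iota => /andP[hm _].
have h2 : (2 <= 2 * m)%N by lia.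
rewrite /sprod /=.
repeat (apply: smul_good; [ first [ apply: oneminus_good | apply: geom_good ] => //; rewrite /= /lb /=; lia | ]).
exact: sone_good.
Qed.

Lemma lcoef0 (n : int) f i j : all (lb n) f -> 2 * i < n -> lcoef f i j = 0.
Proof.
move=> hf hi; elim: f hf => [|t f IH] /=; first by rewrite /lcoef big_nil.
move=> /andP[ht hf]; rewrite /lcoef big_cons -/(lcoef f i j) IH //.
case: ifP => // /andP[/eqP hti _]; move: ht; rewrite /lb hti; lia.
Qed.

(* ph d i j = {}^p h^{i,j}(M_d),  b i d = b_{i,d} = b_i(M_d). *)
Theorem lemma3p8 (ph : nat -> int -> int -> nat) (b : nat -> nat -> nat) :
  (forall (d : nat) (i j : int),
      (ph d i j)%:Z * (-1) ^ (i + j) = Coeff (RHSser b) d i j) ->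
  forall (d : nat) (i j : int),
    (i%:~R < - (d%:R / 2) - 1 :> rat) -> (j%:~R < - (d%:R / 2) - 1 :> rat) ->
    (ph d i j)%:Z * (-1) ^ (i + j) = Coeff Fser d i j.
Proof.
move=> H d i j hi _.
have h2 : 2 * i < - (d%:Z).
  have : ((2 * i + d%:Z)%:~R : rat) < 0.
    rewrite rmorphD rmorphM /= -[(d%:Z)%:~R]/(d%:R : rat).
    have -> : ((2:int)%:~R : rat) = 2 by [].
    lra.
  rewrite ltrz0; lia.
have h1 : all (lb (- (d%:Z))) (lopp (smul (Bser b) Hser d)).
  by rewrite lopp_lb; apply: smul_good; [exact: Bser_good | exact: Hser_good].
rewrite H /Coeff /RHSser /ssub /sadd /ladd /sopp.
rewrite /lcoef big_cat -/(lcoef _ i j) -/(lcoef (lopp (smul (Bser b) Hser d)) i j).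
rewrite (lcoef0 _ _ _ _ h1 h2).
exact: addr0.
Qed.
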